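(* Let $A$ be a commutative noetherian ring containing a field $k$ with $1/2\in k$, and let $P$ be a projective $A$-module. The obstruction class map $\chi:\mathcal{LO}(P)\to\pi_0(\mathcal{Q}(P))$ induces a well-defined map $\overline{\chi}:\pi_0(\mathcal{LO}(P))\to\pi_0(\mathcal{Q}(P))$, and $\overline\chi$ is a bijection. Its inverse is the map $\overline{\eta}':\pi_0(\mathcal{Q}(P))\to\pi_0(\mathcal{LO}(P))$ induced by $\eta'$. Consequently the induced maps $\overline\eta:\pi_0(\widetilde Q(P))\to\pi_0(\mathcal{LO}(P))$, $\overline{\eta}'$, $\overline\nu:\pi_0(\widetilde Q(P))\to\pi_0(\mathcal{Q}(P))$ and $\overline\kappa:\pi_0(\widetilde Q(P))\to\pi_0(\widetilde Q'(P))$ are all bijections.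
   Context: $P^*=\mathrm{Hom}_A(P,A)$ and $P[T]=P\otimes_AA[T]$. Sets. Define $\widetilde Q(P)=\{(f,p,s)\in P^*\oplus P\oplus A: f(p)+s(s-1)=0\}$, $\widetilde Q'(P)=\{(f,p,z): f(p)+z^2=1\}$, $\mathcal{Q}(P)=\{(f,s)\in P^*\oplus A: s(1-s)\in f(P)\}$. A local $P$-orientation is a pair $(I,\omega)$, $I$ an ideal and $\omega:P\to I/I^2$ surjective; $\mathcal{LO}(P)$ is their set. All of these are defined likewise over $A[T]$ for $P[T]$. Homotopy sets. For $\mathcal{F}=\widetilde Q,\widetilde Q',\mathcal{Q}$, $\pi_0(\mathcal{F}(P))$ is the quotient of $\mathcal{F}(P)$ by the equivalence relation generated by $H(0)\sim H(1)$ for $H(T)\in\mathcal{F}(P[T])$, with $H(t)$ the specialization $T=t$. $\pi_0(\mathcal{LO}(P))$ is the quotient of $\mathcal{LO}(P)$ by the equivalence relation generated by $(J(0),\Omega(0))\sim(J(1),\Omega(1))$ for $(J,\Omega)\in\mathcal{LO}(P[T])$, where $J(t)$ is the image of $J$ under $T\mapsto t$ and $\Omega(t)$ is the induced map. Maps. - $\nu(f,p,s)=(f,s)$. - $\eta(f,p,s)=\eta'(f,s)=(f(P)+As,\omega)$, with $\omega$ induced by $f$. - $\kappa(f,p,s)=(2f,2p,2s-1)$, a bijection $\widetilde Q(P)\to\widetilde Q'(P)$. All of these are compatible with homotopy and induce the barred maps. - $\chi(I,\omega)$ is the class $[(f,s)]$ of any $(f,s)\in\mathcal{Q}(P)$ such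 that $f:P\to I$ lifts $\omega$, $s\in I$, and $I=f(P)+As$. Such pairs exist, and this class is independent of the choice. *)

(* Defs.v *)
From HB Require Import structures.
From mathcomp Require Import all_boot all_order all_algebra.
From Stdlib Require Import Relations.
Set Implicit Arguments. Unset Strict Implicit. Unset Printing Implicit Defensive.
Import Order.TTheory GRing.Theory Num.Theory.
Local Open Scope ring_scope.

Definition is_ideal (R : comNzRingType) (I : R -> Prop) : Prop :=
  [/\ I 0, (forall x y, I x -> I y -> I (x + y)) & (forall a x, I x -> I (a * x))].

Definition noetherian (R : comNzRingType) : Prop :=
  forall I : nat -> R -> Prop,
    (forall m, is_ideal (I m)) ->
    (forall m x, I m x -> I m.+1 x) ->
    exists N, forall m, (N <= m)%N -> forall x, I m x <-> I N x.

Definition ideal_sq (R : comNzRingType) (I : R -> Prop) (x : R) : Prop :=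
  exists (m : nat) (a b : 'I_m -> R),
    (forall i, I (a i) /\ I (b i)) /\ x = \sum_(i < m) a i * b i.

Definition same_set (R : Type) (I J : R -> Prop) := forall x, I x <-> J x.

(* A finitely generated projective R-module P is represented as the image  *)
(* of an idempotent matrix e : P = { p : 'rV_n | p *m e = p }.             *)
(* Its dual P^* = Hom(P,R) is represented as { f : 'cV_n | e *m f = f },   *)
(* with evaluation f(p) = (p *m f) 0 0.  Base change P[T] = P (x) R[T] is  *)
(* the module given by the same idempotent viewed over {poly R}.          *)

Section Modules.
Variables (R : comNzRingType) (n : nat).

Definition inP (e : 'M[R]_n) (p : 'rV[R]_n) : Prop := p *m e = p.
Definition inPdual (e : 'M[R]_n) (f : 'cV[R]_n) : Prop := e *m f = f.
Definition ev (f : 'cV[R]_n) (p : 'rV[R]_n) : R := (p *m f) 0 0.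

Definition inQt (e : 'M[R]_n) (x : 'cV[R]_n * 'rV[R]_n * R) : Prop :=
  let: (f, p, s) := x in
  [/\ inPdual e f, inP e p & ev f p + s * (s - 1) = 0].

Definition inQt' (e : 'M[R]_n) (x : 'cV[R]_n * 'rV[R]_n * R) : Prop :=
  let: (f, p, z) := x in
  [/\ inPdual e f, inP e p & ev f p + z ^+ 2 = 1].

Definition inQc (e : 'M[R]_n) (x : 'cV[R]_n * R) : Prop :=
  let: (f, s) := x in
  inPdual e f /\ exists p, inP e p /\ ev f p = s * (1 - s).

Definition imP (e : 'M[R]_n) (f : 'cV[R]_n) (x : R) : Prop :=
  exists p, inP e p /\ x = ev f p.

(* Local P-orientations (I, omega), omega : P -> I/I^2 surjective.  Since P  *)
(* is projective, omega is represented by a lift f : P -> I (f in P^*,     *)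
(* f(P) \subset I); surjectivity of omega means I = f(P) + I^2.  Two lifts  *)
(* represent the same omega iff they agree modulo I^2 (see same_LO).       *)
Definition inLO (e : 'M[R]_n) (x : (R -> Prop) * 'cV[R]_n) : Prop :=
  let: (J0, f) := x in
  [/\ is_ideal J0, inPdual e f,
      (forall p, inP e p -> J0 (ev f p))
    & (forall a, J0 a -> exists p, inP e p /\ ideal_sq J0 (a - ev f p))].

Definition same_LO (e : 'M[R]_n) (x y : (R -> Prop) * 'cV[R]_n) : Prop :=
  inLO e x /\ inLO e y /\ same_set x.1 y.1 /\
  forall p, inP e p -> ideal_sq x.1 (ev x.2 p - ev y.2 p).

End Modules.

Definition eT (R : comNzRingType) (n : nat) (e : 'M[R]_n) : 'M[{poly R}]_n :=
  map_mx polyC e.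

Definition spec_cV (R : comNzRingType) (n : nat) (t : R) (F : 'cV[{poly R}]_n)
  : 'cV[R]_n := map_mx (fun q => q.[t]) F.
Definition spec_rV (R : comNzRingType) (n : nat) (t : R) (F : 'rV[{poly R}]_n)
  : 'rV[R]_n := map_mx (fun q => q.[t]) F.

Definition spec_ideal (R : comNzRingType) (t : R) (J : {poly R} -> Prop)
  : R -> Prop := fun x => exists y, J y /\ x = y.[t].

Definition spec_Qt (R : comNzRingType) (n : nat) (t : R)
  (H : 'cV[{poly R}]_n * 'rV[{poly R}]_n * {poly R}) : 'cV[R]_n * 'rV[R]_n * R :=
  let: (f, p, s) := H in (spec_cV t f, spec_rV t p, s.[t]).

Definition spec_Qc (R : comNzRingType) (n : nat) (t : R)
  (H : 'cV[{poly R}]_n * {poly R}) : 'cV[R]_n * R :=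
  let: (f, s) := H in (spec_cV t f, s.[t]).

Definition spec_LO (R : comNzRingType) (n : nat) (t : R)
  (H : ({poly R} -> Prop) * 'cV[{poly R}]_n) : (R -> Prop) * 'cV[R]_n :=
  let: (J, F) := H in (spec_ideal t J, spec_cV t F).

Definition htpy_Qt (R : comNzRingType) (n : nat) (e : 'M[R]_n) :
  relation ('cV[R]_n * 'rV[R]_n * R) :=
  clos_refl_sym_trans _ (fun x y => exists H, inQt (eT e) H /\
                           x = spec_Qt 0 H /\ y = spec_Qt 1 H).

Definition htpy_Qt' (R : comNzRingType) (n : nat) (e : 'M[R]_n) :
  relation ('cV[R]_n * 'rV[R]_n * R) :=
  clos_refl_sym_trans _ (fun x y => exists H, inQt' (eT e) H /\
                           x = spec_Qt 0 H /\ y = spec_Qt 1 H).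

Definition htpy_Qc (R : comNzRingType) (n : nat) (e : 'M[R]_n) :
  relation ('cV[R]_n * R) :=
  clos_refl_sym_trans _ (fun x y => exists H, inQc (eT e) H /\
                           x = spec_Qc 0 H /\ y = spec_Qc 1 H).

Definition htpy_LO (R : comNzRingType) (n : nat) (e : 'M[R]_n) :
  relation ((R -> Prop) * 'cV[R]_n) :=
  clos_refl_sym_trans _ (fun x y => same_LO e x y \/
     exists H, inLO (eT e) H /\
       same_LO e x (spec_LO 0 H) /\ same_LO e y (spec_LO 1 H)).

Definition nu_map (R : comNzRingType) (n : nat)
  (x : 'cV[R]_n * 'rV[R]_n * R) : 'cV[R]_n * R :=
  let: (f, p, s) := x in (f, s).

Definition eta'_map (R : comNzRingType) (n : nat) (e : 'M[R]_n)
  (x : 'cV[R]_n * R) : (R -> Prop) * 'cV[R]_n :=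
  let: (f, s) := x in
  (fun a => exists p b, inP e p /\ a = ev f p + b * s, f).

Definition eta_map (R : comNzRingType) (n : nat) (e : 'M[R]_n)
  (x : 'cV[R]_n * 'rV[R]_n * R) : (R -> Prop) * 'cV[R]_n :=
  eta'_map e (nu_map x).

Definition kappa_map (R : comNzRingType) (n : nat)
  (x : 'cV[R]_n * 'rV[R]_n * R) : 'cV[R]_n * 'rV[R]_n * R :=
  let: (f, p, s) := x in (2%:R *: f, 2%:R *: p, 2%:R * s - 1).

(* (f, s) is an admissible choice for chi(I, omega): (f,s) in Q(P), f : P -> I *)
(* lifts omega, s in I and I = f(P) + A s.                                 *)
Definition chi_rep (R : comNzRingType) (n : nat) (e : 'M[R]_n)
  (x : (R -> Prop) * 'cV[R]_n) (q : 'cV[R]_n * R) : Prop :=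
  let: (J0, f0) := x in let: (f, s) := q in
  [/\ inQc e q,
      (forall p, inP e p -> J0 (ev f p) /\ ideal_sq J0 (ev f p - ev f0 p)),
      J0 s
    & same_set J0 (fun a => exists p b, inP e p /\ a = ev f p + b * s)].

Definition induces_bij (X Y : Type) (memX : X -> Prop) (memY : Y -> Prop)
  (RX : relation X) (RY : relation Y) (g : X -> Y) : Prop :=
  [/\ (forall x, memX x -> memY (g x)),
      (forall x x', memX x -> memX x' -> RX x x' -> RY (g x) (g x')),
      (forall x x', memX x -> memX x' -> RY (g x) (g x') -> RX x x')
    & (forall y, memY y -> exists x, memX x /\ RY (g x) y)].

(* Main.v *)
Require Import Defs.
From HB Require Import structures.
From mathcomp Require Import all_boot all_order all_algebra.
From Stdlib Require Import Relations.
From Stdlib Require Import Classical IndefiniteDescription.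
From mathcomp Require Import ring fingroup perm.
Set Implicit Arguments. Unset Strict Implicit.
Import GRing.Theory.
Local Open Scope ring_scope.
From mathcomp Require Import zify.

Lemma choice_fun {X Y : Type} (P : X -> Y -> Prop) :
  (forall x, exists y, P x y) -> exists f : X -> Y, forall x, P x (f x).
Proof.
move=> H; exists (fun x => proj1_sig (constructive_indefinite_description _ (H x))).
by move=> x; case: (constructive_indefinite_description _ (H x)).
Qed.

Section Ideals.
Variable R : comNzRingType.
Implicit Types (I J K : R -> Prop) (l : seq R).

Lemma id0 I : is_ideal I -> I 0. Proof. by case. Qed.
Lemma idD I x y : is_ideal I -> I x -> I y -> I (x + y). Proof. by case=> _ h _; apply: h. Qed.
Lemma idM I a x : is_ideal I -> I x -> I (a * x). Proof. by case=> _ _ h; apply: h. Qed.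
Lemma idMr I a x : is_ideal I -> I x -> I (x * a). Proof. by move=> hI hx; rewrite mulrC; apply: idM. Qed.
Lemma idN I x : is_ideal I -> I x -> I (- x).
Proof. by move=> hI hx; rewrite -mulN1r; apply: idM. Qed.
Lemma idB I x y : is_ideal I -> I x -> I y -> I (x - y).
Proof. by move=> hI hx hy; apply: idD => //; apply: idN. Qed.
Lemma id_sum I (T : Type) (r : seq T) (P : pred T) (F : T -> R) :
  is_ideal I -> (forall i, P i -> I (F i)) -> I (\sum_(i <- r | P i) F i).
Proof. by move=> hI hF; apply: big_ind => //; [apply: id0 | move=> x y; apply: idD]. Qed.

Lemma same_ideal I J : same_set I J -> is_ideal I -> is_ideal J.
Proof.
move=> s [h0 hD hM]; split; first by apply/s.
- by move=> x y /s hx /s hy; apply/s; apply: hD.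
- by move=> a x /s hx; apply/s; apply: hM.
Qed.

Definition span l (x : R) := exists c : nat -> R, x = \sum_(i < size l) c i * l`_i.

Lemma span_ideal l : is_ideal (span l).
Proof.
split.
- by exists (fun _ => 0); rewrite big1 // => i _; rewrite mul0r.
- move=> x y [c ->] [d ->]; exists (fun i => c i + d i).
  by rewrite -big_split /=; apply: eq_bigr => i _; rewrite mulrDl.
- move=> a x [c ->]; exists (fun i => a * c i).
  by rewrite mulr_sumr; apply: eq_bigr => i _; rewrite mulrA.
Qed.

Lemma span_mem l i : (i < size l)%N -> span l l`_i.
Proof.
move=> hi; exists (fun j => (j == i)%:R).
rewrite (bigD1 (Ordinal hi)) //= eqxx mul1r big1 ?addr0 // => j hj.
by rewrite (_ : (nat_of_ord j == i) = false) ?mul0r //; apply: negbTE; move: hj; apply: contra => /eqP h; apply/eqP/val_inj.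
Qed.

Lemma span_sub l I : is_ideal I -> (forall i, (i < size l)%N -> I l`_i) ->
  forall x, span l x -> I x.
Proof. by move=> hI hl x [c ->]; apply: id_sum => // i _; apply: idM => //; apply: hl. Qed.

Lemma span_cons l a x : span l x -> span (a :: l) x.
Proof.
case=> c ->; exists (fun i => if i is i'.+1 then c i' else 0).
by rewrite /= big_ord_recl /= mul0r add0r.
Qed.

Lemma span_head l a : span (a :: l) a.
Proof. by apply: (@span_mem (a :: l) 0). Qed.

Lemma sq_ideal I : is_ideal I -> is_ideal (ideal_sq I).
Proof.
move=> hI; split.
- by exists 0%N, (fun _ => 0), (fun _ => 0); split; [case | rewrite big_ord0].
- move=> x y [m1 [a1 [b1 [h1 ->]]]] [m2 [a2 [b2 [h2 ->]]]].
  exists (m1 + m2)%N, (fun i => match split i with inl j => a1 j | inr j => a2 j end),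
    (fun i => match split i with inl j => b1 j | inr j => b2 j end); split.
  + by move=> i; case: (split i).
  + rewrite big_split_ord /=; congr (_ + _); apply: eq_bigr => i _.
    * by rewrite (unsplitK (inl i)).
    * by rewrite (unsplitK (inr i)).
- move=> c x [m [a [b [h ->]]]]; exists m, (fun i => c * a i), b; split.
  + by move=> i; case: (h i) => ha hb; split => //; apply: idM.
  + by rewrite mulr_sumr; apply: eq_bigr => i _; rewrite mulrA.
Qed.

Lemma sq_sub I x : is_ideal I -> ideal_sq I x -> I x.
Proof.
move=> hI [m [a [b [h ->]]]]; apply: id_sum => // i _.
by case: (h i) => ha hb; apply: idMr.
Qed.

Lemma sq_mul I x y : I x -> I y -> ideal_sq I (x * y).
Proof.
move=> hx hy; exists 1%N, (fun _ => x), (fun _ => y); split => //.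
by rewrite big_ord1.
Qed.

Lemma sq_same I J x : same_set I J -> ideal_sq I x -> ideal_sq J x.
Proof.
move=> s [m [a [b [h ->]]]]; exists m, a, b; split => // i.
by case: (h i) => ha hb; split; apply/s.
Qed.

Lemma sq0 I : ideal_sq I 0.
Proof. by exists 0%N, (fun _ => 0), (fun _ => 0); split; [case | rewrite big_ord0]. Qed.

Lemma sq_span l x : ideal_sq (span l) x ->
  exists D : nat -> R, (forall j, span l (D j)) /\ x = \sum_(j < size l) D j * l`_j.
Proof.
case=> m [a [b [h ->]]].
have /choice_fun [c hc] : forall i : 'I_m, exists c : nat -> R,
    b i = \sum_(j < size l) c j * l`_j by move=> i; case: (h i) => _ [c hc]; exists c.
exists (fun j => \sum_(i < m) a i * c i j); split.
- move=> j; apply: id_sum; first exact: span_ideal.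
  by move=> i _; apply: idMr; [exact: span_ideal | case: (h i)].
- rewrite (eq_bigr (fun i => \sum_(j < size l) a i * (c i j * l`_j))); last first.
    by move=> i _; rewrite hc mulr_sumr.
  rewrite exchange_big /=; apply: eq_bigr => j _; rewrite mulr_suml.
  by apply: eq_bigr => i _; rewrite mulrA.
Qed.

End Ideals.

Section Nak.
Variable R : comNzRingType.
Implicit Types (I J K : R -> Prop) (l : seq R).

Lemma prod_cong1 I (T : Type) (r : seq T) (P : pred T) (F : T -> R) :
  is_ideal I -> (forall i, P i -> I (F i - 1)) -> I (\prod_(i <- r | P i) F i - 1).
Proof.
move=> hI hF; apply: (big_rec (fun x => I (x - 1))); first by rewrite subrr; apply: id0.
move=> i x Pi hx; rewrite (_ : F i * x - 1 = F i * (x - 1) + (F i - 1)); last by ring.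
by apply: idD => //; [apply: idM | apply: hF].
Qed.

Lemma det_cong1 I m (M : 'M[R]_m) : is_ideal I ->
  (forall i j, I (M i j - (i == j)%:R)) -> I (\det M - 1).
Proof.
move=> hI hM; rewrite /determinant (bigD1 (1%g : 'S_m)) //= perm.odd_perm1 expr0 mul1r.
rewrite (_ : forall a b : R, a + b - 1 = (a - 1) + b); last by move=> a b; ring.
apply: idD => //.
  apply: prod_cong1 => // i _; rewrite perm.perm1.
  by have := hM i i; rewrite eqxx.
apply: id_sum => // s hs; apply: idM => //.
have [i hi] : exists i, s i != i.
  apply: NNPP => hn; move/negP: hs; apply; apply/eqP/perm.permP => i.
  rewrite perm.perm1; apply/eqP; apply: NNPP => h; apply: hn; exists i; exact/negP.
rewrite (bigD1 i) //=; apply: idMr => //.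
have := hM i (s i); rewrite (_ : (i == s i) = false) ?subr0 //.
by apply/negbTE; rewrite eq_sym.
Qed.

Lemma nakayama K l : is_ideal K ->
  (forall i, (i < size l)%N -> exists k (C : nat -> R),
      K k /\ (forall j, span l (C j)) /\ l`_i = k + \sum_(j < size l) C j * l`_j) ->
  exists S, span l S /\ forall x, span l x -> K ((1 - S) * x).
Proof.
move=> hK hl; set m := size l.
have /choice_fun [kC hkC] : forall i : 'I_m, exists kc : R * (nat -> R),
    K kc.1 /\ (forall j, span l (kc.2 j)) /\ l`_i = kc.1 + \sum_(j < m) kc.2 j * l`_j.
  by move=> i; have [k [C h]] := hl i (ltn_ord i); exists (k, C).
pose M : 'M[R]_m := \matrix_(i, j) ((i == j)%:R - (kC i).2 j).
pose v : 'cV[R]_m := \col_i l`_i.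
pose kv : 'cV[R]_m := \col_i (kC i).1.
have hMv : M *m v = kv.
  apply/matrixP => i j; rewrite !mxE (eq_bigr (fun k : 'I_m => (i == k)%:R * l`_k - (kC i).2 k * l`_k)); last first.
    by move=> k _; rewrite !mxE mulrBl.
  rewrite sumrB (bigD1 i) //= eqxx mul1r big1 ?addr0; last first.
    by move=> k hk; rewrite eq_sym (negbTE hk) mul0r.
  by case: (hkC i) => _ [_ ->]; rewrite addrK.
have hdet : forall i : 'I_m, K (\det M * l`_i).
  move=> i; have : ((\det M)%:M *m v) i 0 = (\adj M *m kv) i 0.
    by rewrite -mul_adj_mx -mulmxA hMv.
  rewrite mul_scalar_mx !mxE => ->.
  by apply: id_sum => // j _; rewrite [kv _ _]mxE; apply: idM => //; case: (hkC j).
exists (1 - \det M); split.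
  rewrite (_ : 1 - \det M = - (\det M - 1)); last by ring.
  apply: idN; first exact: span_ideal.
  apply: det_cong1; first exact: span_ideal.
  move=> i j; rewrite mxE (_ : forall a b : R, a - b - a = - b); last by move=> a b; ring.
  by apply: idN; [exact: span_ideal | case: (hkC i) => _ [h _]].
move=> x [c ->]; rewrite (_ : 1 - (1 - \det M) = \det M); last by ring.
rewrite mulr_sumr; apply: id_sum => // i _.
by rewrite mulrCA; apply: idM.
Qed.

End Nak.

Definition fg_all (R : comNzRingType) := forall I : R -> Prop, is_ideal I ->
  exists l : seq R, (forall i, (i < size l)%N -> I l`_i) /\ forall x, I x -> span l x.

Lemma noeth_fg (R : comNzRingType) : noetherian R -> fg_all R.
Proof.
move=> hN I hI; apply: NNPP => hn.
have hx : forall l : seq R, exists x, (forall i, (i < size l)%N -> I l`_i) -> I x /\ ~ span l x.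
  move=> l; case: (classic (forall i, (i < size l)%N -> I l`_i)) => hl; last first.
    by exists 0 => h; case: (hl h).
  apply: NNPP => hne; apply: hn; exists l; split => // x Ix; apply: NNPP => hs.
  by apply: hne; exists x.
have [nx hnx] := choice_fun hx.
pose L := fix L m := if m is m'.+1 then nx (L m') :: L m' else [::].
have Lin : forall m i, (i < size (L m))%N -> I (L m)`_i.
  elim=> [|m IH] [|i] //=; first by move=> _; case: (hnx (L m) IH).
  by apply: IH.
have [N hN'] := hN (fun m => span (L m)) (fun m => span_ideal _)
   (fun m x => @span_cons _ (L m) (nx (L m)) x).
have := (hN' N.+1 (leqnSn N) (nx (L N))).1 (span_head _ _).
by case: (hnx (L N) (Lin N)).
Qed.

Lemma min_size (R : comNzRingType) (P : {poly R} -> Prop) : (exists f, P f) ->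
  exists f, P f /\ forall g, P g -> (size f <= size g)%N.
Proof.
case=> f Pf; move: {2}(size f) (leqnn (size f)) => n; elim: n f Pf => [|n IH] f Pf hf.
  by exists f; split => // g _; move: hf; rewrite leqn0 => /eqP ->.
case: (classic (exists g, P g /\ (size g < size f)%N)) => [[g [Pg hg]]|hno].
  by apply: (IH g Pg); move: hg hf; lia.
exists f; split => // g Pg; rewrite leqNgt; apply/negP => h; apply: hno; exists g; done.
Qed.

Lemma hilbert (R : comNzRingType) : noetherian R -> fg_all {poly R}.
Proof.
move=> hN J hJ; apply: NNPP => hn.
have hx : forall l : seq {poly R}, exists x, (forall i, (i < size l)%N -> J l`_i) ->
    J x /\ ~ span l x /\ forall g, J g -> ~ span l g -> (size x <= size g)%N.
  move=> l; case: (classic (forall i, (i < size l)%N -> J l`_i)) => hl; last first.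
    by exists 0 => h; case: (hl h).
  have [x [[Jx nsx] hmin]] : exists x, (J x /\ ~ span l x) /\
      forall g, J g /\ ~ span l g -> (size x <= size g)%N.
    apply: min_size; apply: NNPP => hne; apply: hn; exists l; split => // x Jx.
    by apply: NNPP => hs; apply: hne; exists x.
  by exists x => _; split => //; split => // g Jg ng; apply: hmin.
have [nx hnx] := choice_fun hx.
pose L := fix L m := if m is m'.+1 then nx (L m') :: L m' else [::].
have Lin : forall m i, (i < size (L m))%N -> J (L m)`_i /\
    forall g, J g -> ~ span (L m) g -> (size ((L m)`_i)%R <= size g)%N.
  elim=> [|m IH] [|i] //=.
    move=> _; have [h1 [h2 h3]] := hnx (L m) (fun i hi => (IH i hi).1).
    split => // g Jg ng; apply: h3 => // hs; apply: ng; exact: span_cons.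
  move=> hi; have [h1 h2] := IH i hi; split => // g Jg ng; apply: h2 => // hs.
  by apply: ng; apply: span_cons.
have LJ : forall m i, (i < size (L m))%N -> J (L m)`_i by move=> m i hi; case: (Lin m i hi).
have [N hN'] := hN (fun m => span (map lead_coef (L m))) (fun m => span_ideal _)
   (fun m x => @span_cons _ (map lead_coef (L m)) (lead_coef (nx (L m))) x).
have := (hN' N.+1 (leqnSn N) (lead_coef (nx (L N)))).1 (span_head _ _).
case=> c; rewrite size_map => hc.
have [JfN [nsfN minfN]] := hnx (L N) (LJ N).
set fN := nx (L N) in JfN nsfN minfN hc.
set l := L N in JfN nsfN minfN hc.
have hsz : forall i, (i < size l)%N -> (size (l`_i)%R <= size fN)%N.
  by move=> i hi; case: (Lin N i hi) => _ h; apply: h.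
set n := size fN.
pose g := fN - \sum_(i < size l) (c i)%:P * ('X^(n - size (l`_i)%R) * l`_i).
have spanS : span l (\sum_(i < size l) (c i)%:P * ('X^(n - size (l`_i)%R) * l`_i)).
  apply: id_sum; first exact: span_ideal.
  by move=> i _; rewrite mulrA; apply: idM; [exact: span_ideal | apply: span_mem].
have Jg : J g.
  apply: idB => //; apply: id_sum => // i _; rewrite mulrA; apply: idM => //.
  exact: LJ.
have nsg : ~ span l g.
  move=> hs; apply: nsfN; rewrite (_ : fN = g + \sum_(i < size l) (c i)%:P * ('X^(n - size (l`_i)%R) * l`_i)); last first.
    by rewrite /g subrK.
  by apply: idD => //; exact: span_ideal.
have := minfN g Jg nsg; rewrite -/n.
have n0 : (0 < n)%N.
  rewrite lt0n size_poly_eq0; apply/negP => /eqP h; apply: nsfN; rewrite h; apply: id0.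
  exact: span_ideal.
suff : (size g <= n.-1)%N by move=> h1 h2; move: (leq_trans h2 h1); rewrite leqNgt prednK // leqnn.
apply/leq_sizeP => j hj.
rewrite /g coefB coef_sum.
under eq_bigr do rewrite coefCM coefXnM.
have [hjn|hjn] := leqP n j.
  rewrite nth_default // sub0r; apply/eqP; rewrite oppr_eq0; apply/eqP; apply: big1 => i _.
  case: ifP => _; first by rewrite mulr0.
  rewrite nth_default ?mulr0 //.
  have := hsz i (ltn_ord i); move: hjn; rewrite /n; clear; move: (size fN) (size (l`_i)%R) => a b; lia.
have -> : j = n.-1 by lia.
apply/eqP; rewrite -lead_coefE hc subr_eq0; apply/eqP; apply: eq_bigr => i _.
rewrite (nth_map 0) // lead_coefE; congr (_ * _).
have := hsz i (ltn_ord i); case: (posnP (size (l`_i)%R)) => h0 hs.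
  rewrite h0 ifT; last by lia.
  by rewrite nth_default // h0.
by rewrite ifF; [congr nth; lia | lia].
Qed.

Section Mod.
Variables (R : comNzRingType) (n : nat) (e : 'M[R]_n).
Hypothesis he : e *m e = e.
Implicit Types (f g : 'cV[R]_n) (p q : 'rV[R]_n).

Lemma inP0 : inP e 0. Proof. by rewrite /inP mul0mx. Qed.
Lemma inPD p q : inP e p -> inP e q -> inP e (p + q).
Proof. by rewrite /inP mulmxDl => -> ->. Qed.
Lemma inPZ a p : inP e p -> inP e (a *: p).
Proof. by rewrite /inP -scalemxAl => ->. Qed.
Lemma inPN p : inP e p -> inP e (- p).
Proof. by move=> h; rewrite -scaleN1r; apply: inPZ. Qed.
Lemma inP_row i : inP e (row i e).
Proof. by rewrite /inP -row_mul he. Qed.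
Lemma inP_sum (I : Type) (r : seq I) (F : I -> 'rV[R]_n) :
  (forall i, inP e (F i)) -> inP e (\sum_(i <- r) F i).
Proof. by move=> h; apply: big_ind => //; [exact: inP0 | move=> x y; apply: inPD]. Qed.

Lemma evD f p q : ev f (p + q) = ev f p + ev f q.
Proof. by rewrite /ev mulmxDl mxE. Qed.
Lemma evZ f a p : ev f (a *: p) = a * ev f p.
Proof. by rewrite /ev -scalemxAl mxE. Qed.
Lemma evN f p : ev f (- p) = - ev f p.
Proof. by rewrite -scaleN1r evZ mulN1r. Qed.
Lemma evB f p q : ev f (p - q) = ev f p - ev f q.
Proof. by rewrite evD evN. Qed.
Lemma evfD f g p : ev (f + g) p = ev f p + ev g p.
Proof. by rewrite /ev mulmxDr mxE. Qed.
Lemma evfZ f a p : ev (a *: f) p = a * ev f p.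
Proof. by rewrite /ev -scalemxAr mxE. Qed.
Lemma evfB f g p : ev (f - g) p = ev f p - ev g p.
Proof. by rewrite evfD -scaleN1r evfZ mulN1r. Qed.
Lemma ev0 f : ev f 0 = 0. Proof. by rewrite /ev mul0mx mxE. Qed.

Lemma ev_rows f p : inP e p -> ev f p = \sum_i p 0 i * ev f (row i e).
Proof.
rewrite /inP => hp; rewrite -{1}hp mulmx_sum_row /ev.
by rewrite mulmx_suml summxE; apply: eq_bigr => i _; rewrite -scalemxAl mxE.
Qed.

Lemma imP_ideal f : is_ideal (imP e f).
Proof.
split.
- by exists 0; split; [exact: inP0 | rewrite ev0].
- by move=> x y [p [hp ->]] [q [hq ->]]; exists (p + q); split; [apply: inPD | rewrite evD].
- by move=> a x [p [hp ->]]; exists (a *: p); split; [apply: inPZ | rewrite evZ].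
Qed.

Definition etaI (f : 'cV[R]_n) (s : R) := fun a => exists p b, inP e p /\ a = ev f p + b * s.

Lemma etaI_ideal f s : is_ideal (etaI f s).
Proof.
split.
- by exists 0, 0; split; [exact: inP0 | rewrite ev0 mul0r addr0].
- move=> x y [p [b [hp ->]]] [q [c [hq ->]]]; exists (p + q), (b + c); split; first exact: inPD.
  by rewrite evD mulrDl; ring.
- move=> a x [p [b [hp ->]]]; exists (a *: p), (a * b); split; first exact: inPZ.
  by rewrite evZ; ring.
Qed.

End Mod.

Section Spec.
Variables (R : comNzRingType) (n : nat) (e : 'M[R]_n) (t : R).
Implicit Types (F : 'cV[{poly R}]_n) (f : 'cV[R]_n).

Lemma spec_rVE (p : 'rV[{poly R}]_n) : spec_rV t p = map_mx (horner_eval t) p.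
Proof. by []. Qed.
Lemma spec_cVE (p : 'cV[{poly R}]_n) : spec_cV t p = map_mx (horner_eval t) p.
Proof. by []. Qed.

Lemma ev_spec F (p : 'rV[{poly R}]_n) : ev (spec_cV t F) (spec_rV t p) = (ev F p).[t].
Proof. by rewrite /ev spec_rVE spec_cVE -map_mxM mxE. Qed.

Lemma eT_spec : map_mx (horner_eval t) (eT e) = e.
Proof. by apply/matrixP => i j; rewrite !mxE horner_evalE hornerC. Qed.

Lemma inP_spec (p : 'rV[{poly R}]_n) : inP (eT e) p -> inP e (spec_rV t p).
Proof. by rewrite /inP spec_rVE => h; rewrite -{1}eT_spec -map_mxM h. Qed.
Lemma inPdual_spec F : inPdual (eT e) F -> inPdual e (spec_cV t F).
Proof. by rewrite /inPdual spec_cVE => h; rewrite -{1}eT_spec -map_mxM h. Qed.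

Definition cR (p : 'rV[R]_n) : 'rV[{poly R}]_n := map_mx polyC p.
Definition cC (f : 'cV[R]_n) : 'cV[{poly R}]_n := map_mx polyC f.

Lemma spec_cR (p : 'rV[R]_n) : spec_rV t (cR p) = p.
Proof. by apply/matrixP => i j; rewrite !mxE hornerC. Qed.
Lemma spec_cC f : spec_cV t (cC f) = f.
Proof. by apply/matrixP => i j; rewrite !mxE hornerC. Qed.
Lemma ev_c f (p : 'rV[R]_n) : ev (cC f) (cR p) = (ev f p)%:P.
Proof. by rewrite /ev /cC /cR -map_mxM mxE. Qed.
Lemma inP_c (p : 'rV[R]_n) : inP e p -> inP (eT e) (cR p).
Proof. by rewrite /inP /cR /eT => h; rewrite -map_mxM h. Qed.
Lemma inPdual_c f : inPdual e f -> inPdual (eT e) (cC f).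
Proof. by rewrite /inPdual /cC /eT => h; rewrite -map_mxM h. Qed.

Lemma inQc_spec H : inQc (eT e) H -> inQc e (spec_Qc t H).
Proof.
case: H => F S [hF [p [hp hFp]]]; split; first exact: inPdual_spec.
exists (spec_rV t p); split; first exact: inP_spec.
by rewrite ev_spec hFp hornerM hornerD hornerN hornerC.
Qed.

Lemma inQt_spec H : inQt (eT e) H -> inQt e (spec_Qt t H).
Proof.
case: H => [[F p] S] [hF hp hFp]; split; [exact: inPdual_spec | exact: inP_spec |].
have -> : S.[t] * (S.[t] - 1) = (S * (S - 1)).[t] by rewrite hornerM hornerD hornerN hornerC.
by rewrite ev_spec -hornerD hFp hornerC.
Qed.

End Spec.

Lemma span_in (R : comNzRingType) (l : seq R) x : x \in l -> span l x.
Proof. by move=> h; rewrite -(nth_index 0 h); apply: span_mem; rewrite index_mem. Qed.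

Lemma htQ_step (R : comNzRingType) n (e : 'M[R]_n) H :
  inQc (eT e) H -> htpy_Qc e (spec_Qc 0 H) (spec_Qc 1 H).
Proof. by move=> h; apply: rst_step; exists H. Qed.

Lemma htQ_sym (R : comNzRingType) n (e : 'M[R]_n) x y : htpy_Qc e x y -> htpy_Qc e y x.
Proof. exact: rst_sym. Qed.
Lemma htQ_trans (R : comNzRingType) n (e : 'M[R]_n) x y z :
  htpy_Qc e x y -> htpy_Qc e y z -> htpy_Qc e x z.
Proof. exact: rst_trans. Qed.

Lemma inPdualD (R : comNzRingType) n (e : 'M[R]_n) (f g : 'cV[R]_n) :
  inPdual e f -> inPdual e g -> inPdual e (f + g).
Proof. by rewrite /inPdual mulmxDr => -> ->. Qed.
Lemma inPdualZ (R : comNzRingType) n (e : 'M[R]_n) a (f : 'cV[R]_n) :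
  inPdual e f -> inPdual e (a *: f).
Proof. by rewrite /inPdual -scalemxAr => ->. Qed.

Section Chi.
Variables (R : comNzRingType) (n : nat) (e : 'M[R]_n).
Hypothesis he : e *m e = e.
Implicit Types (f g : 'cV[R]_n) (p : 'rV[R]_n).

Lemma eT_idem : eT e *m eT e = eT e.
Proof. by rewrite /eT -map_mxM he. Qed.


Lemma link (J0 : R -> Prop) f s s' : inPdual e f -> J0 s -> J0 s' ->
  (forall x, J0 x -> imP e f ((1 - s) * x)) ->
  (forall x, J0 x -> imP e f ((1 - s') * x)) ->
  htpy_Qc e (f, s) (f, s').
Proof.
move=> hf hs hs' h1 h2.
have [q0 [hq0 hq0e]] : imP e f (s' - s).
  rewrite (_ : s' - s = (1 - s) * s' - (1 - s') * s); last by ring.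
  by apply: idB; [exact: imP_ideal | apply: h1 | apply: h2].
have [p0 [hp0 hp0e]] := h1 s hs.
set d := s' - s in hq0e.
pose S : {poly R} := s%:P + 'X * d%:P.
pose pt : 'rV[{poly R}]_n := cR p0 + ('X * (1 - 2%:R * s)%:P - 'X^2 * d%:P) *: cR q0.
have H1 : inQc (eT e) (cC f, S).
  split; first exact: inPdual_c.
  exists pt; split.
    by apply: inPD; [apply: inP_c | apply: inPZ; apply: inP_c].
  rewrite evD evZ !ev_c -hp0e -hq0e /S !(polyCM, polyCB, polyC1, polyCD, polyCN, polyCMn).
  ring.
have := htQ_step H1; rewrite /spec_Qc !spec_cC /S !hornerE.
rewrite /d => h; have E : s + s' - s = s' by ring.
exact: (eq_rect _ (fun z => htpy_Qc e (f, s) (f, z)) h s' E).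
Qed.

Lemma chi_inQc x q : chi_rep e x q -> inQc e q.
Proof. by case: x => J0 f0; case: q => f s; case. Qed.

Lemma chi_ideal x q : chi_rep e x q -> is_ideal x.1.
Proof.
case: x => J0 f0; case: q => f s [_ _ _ hs] /=.
by apply: (same_ideal (I := etaI e f s)); [move=> y; split => /hs | apply: etaI_ideal].
Qed.

Lemma chi_one_minus J0 f0 f s : chi_rep e (J0, f0) (f, s) ->
  forall x, J0 x -> imP e f ((1 - s) * x).
Proof.
move=> [[hf [p0 [hp0 hp0e]]] h2 h3 h4] x /h4 [p [b [hp ->]]].
exists ((1 - s) *: p + b *: p0); split; first by apply: inPD; apply: inPZ.
by rewrite evD !evZ hp0e; ring.
Qed.

Lemma exist_chi x : fg_all R -> inLO e x -> exists q, chi_rep e x q.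
Proof.
case: x => J0 f0 hfg [hJ hf0 hin hsurj].
have [l [hl hsp]] := hfg J0 hJ.
have sJ : same_set J0 (span l).
  by move=> y; split; [apply: hsp | apply: span_sub].
have [S [hS hSK]] : exists S, span l S /\ forall x, span l x -> imP e f0 ((1 - S) * x).
  apply: nakayama; first exact: imP_ideal.
  move=> i hi; have [p [hp hsq]] := hsurj _ (hl i hi).
  have [D [hD hDe]] := sq_span (sq_same sJ hsq).
  exists (ev f0 p), D; split; first by exists p.
  by split => //; rewrite -hDe addrC subrK.
exists (f0, S); split.
- split => //; have [p [hp hpe]] := hSK S hS; exists p; split => //.
  by rewrite -hpe mulrC.
- by move=> p hp; split; [apply: hin | rewrite subrr; apply: sq0].
- exact: (span_sub hJ hl hS).
- move=> a; split.
    move=> ha; have [p [hp hpe]] := hSK a (hsp a ha).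
    by exists p, a; split => //; rewrite -hpe; ring.
  case=> p [b [hp ->]]; apply: idD => //; first exact: hin.
  by apply: idM => //; apply: (span_sub hJ hl hS).
Qed.

Lemma horner_ideal (J0 : R -> Prop) (t : R) : is_ideal J0 ->
  is_ideal (fun y : {poly R} => J0 y.[t]).
Proof.
move=> hJ; split.
- by rewrite horner0; apply: id0.
- by move=> x y hx hy; rewrite hornerD; apply: idD.
- by move=> a x hx; rewrite hornerM; apply: idM.
Qed.

Lemma chi_unique x q q' : chi_rep e x q -> chi_rep e x q' -> htpy_Qc e q q'.
Proof.
move=> cq cq'; have hJ := chi_ideal cq.
move: cq cq' hJ; case: x => J0 f0; case: q => f s; case: q' => g t cq cq' /= hJ.
have om1 := chi_one_minus cq; have om2 := chi_one_minus cq'.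
case: cq => [[hf [p0 [hp0 hp0e]]] hf2 hs hs4]; case: cq' => [[hg _] hg2 ht ht4].
have hdiff : forall p, inP e p -> ideal_sq J0 (ev (g - f) p).
  move=> p hp; rewrite evfB (_ : ev g p - ev f p = (ev g p - ev f0 p) - (ev f p - ev f0 p)); last by ring.
  by apply: idB; [exact: sq_ideal | case: (hg2 p hp) | case: (hf2 p hp)].
pose F : 'cV[{poly R}]_n := cC f + 'X *: cC (g - f).
have evF : forall p, ev F (cR p) = (ev f p)%:P + 'X * (ev (g - f) p)%:P.
  by move=> p; rewrite /F (evfD (cC f)) (evfZ (cC (g - f))) !ev_c.
pose l := map (fun i => (ev f (row i e))%:P) (enum 'I_n) ++ [:: s%:P].
have hJc := span_ideal l.
have const : forall a, J0 a -> span l a%:P.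
  move=> a /hs4 [p [b [hp ->]]]; rewrite (ev_rows f hp) polyCD polyCM rmorph_sum /=.
  apply: idD => //; last first.
    by apply: idM => //; apply: span_in; rewrite mem_cat mem_seq1 eqxx orbT.
  apply: id_sum => // i _; rewrite polyCM; apply: idM => //; apply: span_in.
  by rewrite mem_cat; apply/orP; left; apply/mapP; exists i; rewrite ?mem_enum.
have sqc : forall a, ideal_sq J0 a -> ideal_sq (span l) a%:P.
  move=> a [m [u [v [huv ->]]]]; exists m, (fun i => (u i)%:P), (fun i => (v i)%:P); split.
    by move=> i; case: (huv i) => h1 h2; split; apply: const.
  by rewrite rmorph_sum; apply: eq_bigr => i _; rewrite rmorphM.
have hsqJ := sq_ideal hJc.
have key : forall p, inP e p -> ideal_sq (span l) ((ev f p)%:P - ev F (cR p)).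
  move=> p hp; rewrite evF (_ : forall a b : {poly R}, a - (a + b) = - b); last by move=> *; ring.
  by apply: idN => //; apply: idM => //; apply: sqc; apply: hdiff.
pose K := imP (eT e) F.
have hK : is_ideal K by apply: imP_ideal.
have [S [hS hSK]] : exists S, span l S /\ forall y, span l y -> K ((1 - S) * y).
  apply: nakayama => // i hi.
  have hex : exists k, K k /\ ideal_sq (span l) (l`_i - k).
    have := mem_nth 0 hi; rewrite mem_cat => /orP [/mapP [j _ ->]|].
      exists (ev F (cR (row j e))); split; first by exists (cR (row j e)); split => //; apply: inP_c; apply: inP_row.
      by apply: key; apply: inP_row.
    rewrite mem_seq1 => /eqP ->.
    exists (ev F (cR p0)); split; first by exists (cR p0); split => //; apply: inP_c.
    rewrite (_ : s%:P - ev F (cR p0) = ((ev f p0)%:P - ev F (cR p0)) + s%:P * s%:P); last first.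
      by rewrite hp0e polyCM polyCB polyC1; ring.
    by apply: idD => //; [apply: key | apply: sq_mul; apply: const].
  case: hex => k [hk hsq]; have [D [hD hDe]] := sq_span hsq.
  by exists k, D; split => //; split => //; rewrite -hDe addrC subrK.
have hinF : inPdual (eT e) F.
  apply: inPdualD; [apply: inPdual_c | apply: inPdualZ; apply: inPdual_c] => //.
  by rewrite /inPdual mulmxBr hg hf.
have hH : inQc (eT e) (F, S).
  split => //; have [p [hp hpe]] := hSK S hS; exists p; split => //.
  by rewrite -hpe mulrC.
have specF : forall t0, spec_cV t0 F = f + t0 *: (g - f).
  by move=> t0; rewrite spec_cVE map_mxD map_mxZ /= -!spec_cVE !spec_cC horner_evalE hornerX.
have SJ : forall t0, J0 S.[t0].
  move=> t0; apply: (span_sub (horner_ideal t0 hJ)) hS => i hi.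
  have := mem_nth 0 hi; rewrite mem_cat => /orP [/mapP [j _ ->]|].
    by rewrite hornerC; case: (hf2 _ (inP_row he j)).
  by rewrite mem_seq1 => /eqP ->; rewrite hornerC.
have SK : forall t0 y, J0 y -> imP e (spec_cV t0 F) ((1 - S.[t0]) * y).
  move=> t0 y hy; have [p [hp hpe]] := hSK _ (const y hy).
  exists (spec_rV t0 p); split; first exact: inP_spec.
  by rewrite ev_spec -hpe hornerM hornerD hornerN !hornerC.
have step := htQ_step hH; rewrite /spec_Qc !specF scale0r addr0 scale1r addrC subrK in step.
apply: htQ_trans; first by apply: (link hf hs (SJ 0)) => // y hy; have := SK 0 y hy; rewrite specF scale0r addr0.
apply: htQ_trans; first exact: step.
apply: (link hg (SJ 1) ht) => // y hy.
by have := SK 1 y hy; rewrite specF scale1r addrC subrK.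
Qed.

End Chi.

Lemma crst_mem (X : Type) (G : relation X) (M : X -> Prop) :
  (forall x y, G x y -> M x /\ M y) ->
  forall x y, clos_refl_sym_trans _ G x y -> x = y \/ (M x /\ M y).
Proof.
move=> hG x y; elim=> {x y}.
- by move=> x y /hG; right.
- by left.
- by move=> x y _ [h|[h1 h2]]; [left; rewrite h | right].
- move=> x y z _ [h|[h1 h2]] _ [h'|[h3 h4]]; subst; by [left | right].
Qed.

Section Gen.
Variables (R : comNzRingType) (n : nat) (e : 'M[R]_n).
Implicit Types (f g : 'cV[R]_n) (p : 'rV[R]_n).

Lemma inLO_same (I I' : R -> Prop) f : same_set I I' -> inLO e (I, f) -> inLO e (I', f).
Proof.
move=> s [hI hf hin hsurj]; split => //.
- exact: same_ideal s hI.
- by move=> p hp; apply/s; apply: hin.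
- move=> a /s ha; have [p [hp hsq]] := hsurj a ha; exists p; split => //.
  exact: sq_same s hsq.
Qed.

Lemma eta_LO q : inQc e q -> inLO e (eta'_map e q).
Proof.
case: q => f s [hf [p0 [hp0 hp0e]]]; split => //.
- exact: etaI_ideal.
- by move=> p hp; exists p, 0; split => //; rewrite mul0r addr0.
- move=> a [p [b [hp ->]]]; exists (p + b *: p0); split; first by apply: inPD => //; apply: inPZ.
  rewrite evD evZ hp0e (_ : forall x : R, x + b * s - (x + b * (s * (1 - s))) = (b * s) * s); last by move=> *; ring.
  apply: sq_mul.
    by exists 0, b; split; [exact: inP0 | rewrite ev0 add0r].
  by exists 0, 1; split; [exact: inP0 | rewrite ev0 add0r mul1r].
Qed.

Lemma chi_eta q : inQc e q -> chi_rep e (eta'_map e q) q.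
Proof.
case: q => f s hq; split => //.
- move=> p hp; split; first by exists p, 0; split => //; rewrite mul0r addr0.
  by rewrite subrr; apply: sq0.
- by exists 0, 1; split; [exact: inP0 | rewrite ev0 add0r mul1r].
Qed.

Lemma chi_same x z r : same_LO e x z -> chi_rep e z r -> chi_rep e x r.
Proof.
case: x => I1 g1; case: z => I2 g2; case: r => f s.
move=> [[hI1 _ _ _] [_ [/= s12 /= hsq]]] /= [hq h2 h3 h4]; split => //.
- move=> p hp; have [h21 h22] := h2 p hp; split; first by apply/s12.
  rewrite (_ : ev f p - ev g1 p = (ev f p - ev g2 p) - (ev g1 p - ev g2 p)); last by ring.
  apply: idB; [exact: sq_ideal | | exact: hsq].
  by apply: sq_same h22 => y; split => /s12.
- by apply/s12.
- by move=> y; split => [/s12 /h4 | /h4 /s12].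
Qed.

Lemma chi_eta_same x q : chi_rep e x q -> inLO e x -> same_LO e (eta'_map e q) x.
Proof.
move=> hc hx; have hq := chi_inQc hc; split; first exact: eta_LO.
split => //; move: hc; case: x {hx} => J0 f0; case: q {hq} => f s [_ h2 _ h4] /=.
split; first by move=> y; split => /h4.
move=> p hp; case: (h2 p hp) => _ hsq; apply: sq_same hsq => y; split => /h4 //.
Qed.

Lemma sq_horner (J : {poly R} -> Prop) t y : ideal_sq J y -> ideal_sq (spec_ideal t J) y.[t].
Proof.
case=> m [a [b [h ->]]]; exists m, (fun i => (a i).[t]), (fun i => (b i).[t]); split.
  by move=> i; case: (h i) => h1 h2; split; [exists (a i) | exists (b i)].
by rewrite horner_sum; apply: eq_bigr => i _; rewrite hornerM.
Qed.

Lemma spec_etaI t F S : same_set (spec_ideal t (etaI (eT e) F S)) (etaI e (spec_cV t F) S.[t]).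
Proof.
move=> x; split.
  case=> y [[p [b [hp ->]]] ->]; exists (spec_rV t p), b.[t]; split; first exact: inP_spec.
  by rewrite hornerD hornerM ev_spec.
case=> p [b [hp ->]]; exists (ev F (cR p) + b%:P * S); split.
  by exists (cR p), b%:P; split => //; apply: inP_c.
by rewrite hornerD hornerM hornerC -ev_spec spec_cR.
Qed.

Lemma chi_spec t H Q : chi_rep (eT e) H Q -> chi_rep e (spec_LO t H) (spec_Qc t Q).
Proof.
case: H => J F0; case: Q => F S hc; have hq := chi_inQc hc; move: hc => [_ h2 h3 h4].
split.
- exact: (inQc_spec t hq).
- move=> p hp; have [h21 h22] := h2 _ (inP_c hp); split.
    by exists (ev F (cR p)); split => //; rewrite -ev_spec spec_cR.
  have := sq_horner t h22; rewrite hornerD hornerN -!ev_spec !spec_cR //.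
- by exists S.
- move=> x; split.
    case=> y [/h4 hy ->]; apply/(spec_etaI t F S); exists y; done.
  move/(spec_etaI t F S) => [y [hy ->]]; exists y; split => //; exact/h4.
Qed.

Lemma eta_spec t H : inQc (eT e) H ->
  same_LO e (eta'_map e (spec_Qc t H)) (spec_LO t (eta'_map (eT e) H)).
Proof.
case: H => F S hH; have hL := eta_LO (inQc_spec t hH).
split => //; split.
  apply: (inLO_same (I := etaI e (spec_cV t F) S.[t])) => //.
  by move=> y; case: (spec_etaI t F S y) => h1 h2; split => [/h2|/h1].
split; first by move=> y; case: (spec_etaI t F S y) => h1 h2; split => [/h2|/h1].
by move=> p hp /=; rewrite subrr; apply: sq0.
Qed.

End Gen.

Section NuGen.
Variables (R : comNzRingType) (n : nat) (e : 'M[R]_n).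
Lemma nu_Qc x : inQt e x -> inQc e (nu_map x).
Proof.
case: x => [[f p] s] [hf hp hev]; split => //; exists p; split => //.
by apply/eqP; rewrite -subr_eq0 -hev; apply/eqP; ring.
Qed.

Lemma nu_lift u : inQc e u -> exists x, inQt e x /\ nu_map x = u.
Proof.
case: u => f s [hf [p [hp hpe]]]; exists (f, p, s); split => //; split => //.
by rewrite hpe; ring.
Qed.

Lemma nu_spec (t : R) (H : 'cV[{poly R}]_n * 'rV[{poly R}]_n * {poly R}) : nu_map (spec_Qt t H) = spec_Qc t (nu_map H).
Proof. by case: H => [[F P] S]. Qed.

End NuGen.

Section Htpy.
Variables (R : comNzRingType) (n : nat) (e : 'M[R]_n).
Hypothesis he : e *m e = e.
Implicit Types (f g : 'cV[R]_n) (p : 'rV[R]_n).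

Lemma chi_wd : fg_all R -> fg_all {poly R} -> forall x y, htpy_LO e x y ->
  forall q q', chi_rep e x q -> chi_rep e y q' -> htpy_Qc e q q'.
Proof.
move=> hfg hfgT x y hxy; elim: hxy => {x y}.
- move=> x y [hs|[H [hH [s0 s1]]]] q q' cq cq'.
    exact: (chi_unique he cq (chi_same hs cq')).
  have [Q hQ] := exist_chi hfgT hH.
  have c0 := chi_same s0 (chi_spec 0 hQ); have c1 := chi_same s1 (chi_spec 1 hQ).
  apply: htQ_trans; first exact: (chi_unique he cq c0).
  apply: htQ_trans; first exact: (htQ_step (chi_inQc hQ)).
  exact: (chi_unique he c1 cq').
- by move=> x q q' c c'; apply: chi_unique c c'.
- by move=> x y _ IH q q' c c'; apply: htQ_sym; apply: IH.
- move=> x y z hxy IH1 _ IH2 q q' cq cq'.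
  have [r hr] : exists r, chi_rep e y r.
    case: (crst_mem (M := inLO e) _ hxy).
    + by move=> a b [hs|[H [_ [s0 s1]]]]; [case: hs => h1 [h2 _] | case: s0 => h1 _; case: s1 => h2 _].
    + by move=> <-; exists q.
    + by case=> _ hy; apply: exist_chi.
  by apply: htQ_trans (IH1 _ _ cq hr) (IH2 _ _ hr cq').
Qed.

Lemma eta_htpy q q' : htpy_Qc e q q' -> htpy_LO e (eta'_map e q) (eta'_map e q').
Proof.
elim=> {q q'}.
- move=> x y [H [hH [-> ->]]]; apply: rst_step; right.
  exists (eta'_map (eT e) H); split; first exact: eta_LO.
  by split; apply: eta_spec.
- by move=> x; apply: rst_refl.
- by move=> x y _ h; apply: rst_sym.
- by move=> x y z _ h1 _ h2; apply: rst_trans h1 h2.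
Qed.

Lemma nu_htpy x x' : htpy_Qt e x x' -> htpy_Qc e (nu_map x) (nu_map x').
Proof.
elim=> {x x'}.
- move=> x y [H [hH [-> ->]]]; rewrite !nu_spec; apply: htQ_step.
  exact: nu_Qc.
- by move=> x; apply: rst_refl.
- by move=> x y _ h; apply: rst_sym.
- by move=> x y z _ h1 _ h2; apply: rst_trans h1 h2.
Qed.

Lemma same_nu x x' : inQt e x -> inQt e x' -> nu_map x = nu_map x' -> htpy_Qt e x x'.
Proof.
case: x => [[f p] s]; case: x' => [[f' p'] s'] [hf hp hev] [hf' hp' hev'] /= [Ef Es]; subst f' s'.
have E : ev f p' = ev f p by apply: (addIr (s * (s - 1))); rewrite hev hev'.
pose H := (cC f, cR p + 'X *: cR (p' - p), s%:P).
apply: rst_step; exists H; split.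
  split; first exact: inPdual_c.
    by apply: inPD; [apply: inP_c | apply: inPZ; apply: inP_c; apply: inPD => //; apply: inPN].
  rewrite evD evZ !ev_c evB E subrr polyC0 mulr0 addr0 -polyC1 -polyCB -polyCM -polyCD hev polyC0 //.
rewrite /H /spec_Qt /= !spec_cC !hornerC !spec_rVE !(map_mxD, map_mxZ) /= -!spec_rVE !spec_cR.
by rewrite !horner_evalE !hornerX scale0r scale1r addr0 addrC subrK.
Qed.

Lemma Qc_mem : forall x y, (fun x y => exists H, inQc (eT e) H /\ x = spec_Qc 0 H /\ y = spec_Qc 1 H) x y ->
  inQc e x /\ inQc e y.
Proof. by move=> x y [H [hH [-> ->]]]; split; apply: inQc_spec. Qed.

Lemma nu_inj u v : htpy_Qc e u v -> forall x x', inQt e x -> inQt e x' ->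
  nu_map x = u -> nu_map x' = v -> htpy_Qt e x x'.
Proof.
move=> huv; elim: huv => {u v}.
- move=> u v [H [hH [-> ->]]] x x' hx hx' hu hv.
  have [Ht [hHt hHtE]] := nu_lift hH.
  apply: rst_trans (_ : htpy_Qt e (spec_Qt 0 Ht) x') .
    by apply: same_nu => //; [exact: inQt_spec | rewrite nu_spec hHtE].
  apply: rst_trans (_ : htpy_Qt e (spec_Qt 1 Ht) x') .
    by apply: rst_step; exists Ht.
  by apply: same_nu => //; [exact: inQt_spec | rewrite nu_spec hHtE].
- by move=> u x x' hx hx' h1 h2; apply: same_nu => //; rewrite h1 h2.
- by move=> u v _ IH x x' hx hx' h1 h2; apply: rst_sym; apply: IH.
- move=> u w v huw IH1 _ IH2 x x' hx hx' h1 h2.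
  have [xw [hxw hxwE]] : exists xw, inQt e xw /\ nu_map xw = w.
    case: (crst_mem Qc_mem huw) => [<-|[_ hw]]; first by exists x.
    exact: nu_lift.
  by apply: rst_trans (IH1 _ _ hx hxw h1 hxwE) (IH2 _ _ hxw hx' hxwE h2).
Qed.

End Htpy.

Definition kinv (R : comNzRingType) n (c : R) (x : 'cV[R]_n * 'rV[R]_n * R) :=
  let: (f, p, z) := x in (c *: f, c *: p, c * (z + 1)).

Section KGen.
Variables (R : comNzRingType) (n : nat) (e : 'M[R]_n).
Implicit Types (x y : 'cV[R]_n * 'rV[R]_n * R).

Lemma kappa_Qt' x : inQt e x -> inQt' e (kappa_map x).
Proof.
case: x => [[f p] s] [hf hp hev]; split.
- exact: inPdualZ.
- exact: inPZ.
- have E : ev f p = - (s * (s - 1)) by apply/eqP; rewrite -addr_eq0 hev.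
  by rewrite evZ evfZ E; ring.
Qed.

Lemma kinv_Qt c x : c * 2%:R = 1 -> inQt' e x -> inQt e (kinv c x).
Proof.
move=> hc; case: x => [[f p] z] [hf hp hev]; split.
- exact: inPdualZ.
- exact: inPZ.
- have E : ev f p = 1 - z ^+ 2 by rewrite -hev addrK.
  rewrite evZ evfZ E; apply: (@eq_trans _ _ ((z + 1) * c * (c * 2%:R - 1))); first by ring.
  by rewrite hc subrr mulr0.
Qed.

Lemma kinvK c x : c * 2%:R = 1 -> kinv c (kappa_map x) = x.
Proof.
move=> hc; case: x => [[f p] s] /=.
by rewrite !scalerA hc !scale1r subrK mulrA hc mul1r.
Qed.

Lemma kappaK c x : c * 2%:R = 1 -> kappa_map (kinv c x) = x.
Proof.
move=> hc; case: x => [[f p] z] /=; have hc' : 2%:R * c = 1 by rewrite mulrC.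
by rewrite !scalerA hc' !scale1r mulrA hc' mul1r addrK.
Qed.

Lemma kappa_spec t (H : 'cV[{poly R}]_n * 'rV[{poly R}]_n * {poly R}) :
  spec_Qt t (kappa_map H) = kappa_map (spec_Qt t H).
Proof.
case: H => [[F P] S] /=.
rewrite spec_cVE spec_rVE !map_mxZ -spec_cVE -spec_rVE rmorph_nat.
by rewrite -horner_evalE rmorphB rmorphM rmorph_nat rmorph1.
Qed.

Lemma kinv_spec c t (H : 'cV[{poly R}]_n * 'rV[{poly R}]_n * {poly R}) :
  spec_Qt t (kinv c%:P H) = kinv c (spec_Qt t H).
Proof.
case: H => [[F P] S] /=.
by rewrite spec_cVE spec_rVE !map_mxZ -spec_cVE -spec_rVE /= horner_evalE hornerC hornerM hornerD !hornerC.
Qed.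

End KGen.

Section KH.
Variables (R : comNzRingType) (n : nat) (e : 'M[R]_n).

Lemma kappa_htpy x x' : htpy_Qt e x x' -> htpy_Qt' e (kappa_map x) (kappa_map x').
Proof.
elim=> {x x'}.
- move=> x y [H [hH [-> ->]]]; apply: rst_step; exists (kappa_map H); split.
    exact: kappa_Qt'.
  by rewrite !kappa_spec.
- by move=> x; apply: rst_refl.
- by move=> x y _ h; apply: rst_sym.
- by move=> x y z _ h1 _ h2; apply: rst_trans h1 h2.
Qed.

Lemma kinv_htpy c y y' : c * 2%:R = 1 -> htpy_Qt' e y y' -> htpy_Qt e (kinv c y) (kinv c y').
Proof.
move=> hc; elim=> {y y'}.
- move=> x y [H [hH [-> ->]]]; apply: rst_step; exists (kinv c%:P H); split.
    apply: kinv_Qt => //; by rewrite mulr_natr -polyCMn -mulr_natr hc.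
  by rewrite !kinv_spec.
- by move=> x; apply: rst_refl.
- by move=> x y _ h; apply: rst_sym.
- by move=> x y z _ h1 _ h2; apply: rst_trans h1 h2.
Qed.

End KH.

Theorem lemma2p8 (A : comNzRingType) (k : fieldType) (phi : {rmorphism k -> A})
  (h2 : (2%:R : k) != 0) (hA : noetherian A)
  (n : nat) (e : 'M[A]_n) (he : e *m e = e) :
  (* chi is defined: admissible choices exist *)
  (forall x, inLO e x -> exists q, chi_rep e x q) /\
  (* chi induces a well-defined map chibar on pi_0(LO(P)) *)
  (forall x y q q', inLO e x -> inLO e y -> htpy_LO e x y ->
     chi_rep e x q -> chi_rep e y q' -> htpy_Qc e q q') /\
  (* eta' induces a well-defined map on pi_0(Q(P)) *)
  (forall q, inQc e q -> inLO e (eta'_map e q)) /\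
  (forall q q', inQc e q -> inQc e q' -> htpy_Qc e q q' ->
     htpy_LO e (eta'_map e q) (eta'_map e q')) /\
  (* eta'bar o chibar = id *)
  (forall x q, inLO e x -> chi_rep e x q -> htpy_LO e (eta'_map e q) x) /\
  (* chibar o eta'bar = id *)
  (forall q q', inQc e q -> chi_rep e (eta'_map e q) q' -> htpy_Qc e q' q) /\
  (* hence chibar is a bijection; and the other induced maps are bijections *)
  induces_bij (inQt e) (inLO e) (htpy_Qt e) (htpy_LO e) (eta_map e) /\
  induces_bij (inQc e) (inLO e) (htpy_Qc e) (htpy_LO e) (eta'_map e) /\
  induces_bij (inQt e) (inQc e) (htpy_Qt e) (htpy_Qc e) (@nu_map A n) /\
  induces_bij (inQt e) (inQt' e) (htpy_Qt e) (htpy_Qt' e) (@kappa_map A n).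
Proof.
have fgA := noeth_fg hA; have fgT := hilbert hA.
pose c := phi (2%:R^-1).
have hc : c * 2%:R = 1.
  by rewrite /c -(rmorph_nat phi) -rmorphM mulVf // rmorph1.
have C1 : forall x, inLO e x -> exists q, chi_rep e x q.
  by move=> x hx; apply: exist_chi.
have C2 : forall x y q q', htpy_LO e x y -> chi_rep e x q -> chi_rep e y q' -> htpy_Qc e q q'.
  by move=> x y q q' h c1 c2; apply: (chi_wd he fgA fgT h c1 c2).
have C5 : forall x q, inLO e x -> chi_rep e x q -> htpy_LO e (eta'_map e q) x.
  by move=> x q hx hq; apply: rst_step; left; apply: chi_eta_same.
split => //.
split; first by move=> x y q q' _ _; apply: C2.
split; first by move=> q; apply: eta_LO.
split; first by move=> q q' _ _; apply: eta_htpy.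
split => //.
split; first by move=> q q' hq hc'; apply: (chi_unique he hc' (chi_eta hq)).
split.
  split.
  - by move=> x hx; apply: eta_LO; apply: nu_Qc.
  - by move=> x x' _ _ h; apply: eta_htpy; apply: nu_htpy.
  - move=> x x' hx hx' h.
    move: (C2 _ _ _ _ h (chi_eta (nu_Qc hx)) (chi_eta (nu_Qc hx'))) => h'.
    exact: (nu_inj h' hx hx' erefl erefl).
  - move=> y hy; have [q hq] := C1 y hy; have [x [hx hxe]] := nu_lift (chi_inQc hq).
    by exists x; split => //; rewrite /eta_map hxe; apply: C5.
split.
  split.
  - by move=> q hq; apply: eta_LO.
  - by move=> q q' _ _ h; apply: eta_htpy.
  - by move=> q q' hq hq' h; apply: (C2 _ _ _ _ h (chi_eta hq) (chi_eta hq')).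
  - by move=> y hy; have [q hq] := C1 y hy; exists q; split; [apply: chi_inQc hq | apply: C5].
split.
  split.
  - by move=> x hx; apply: nu_Qc.
  - by move=> x x' _ _ h; apply: nu_htpy.
  - by move=> x x' hx hx' h; apply: (nu_inj h).
  - by move=> u hu; have [x [hx hxe]] := nu_lift hu; exists x; split => //; rewrite hxe; apply: rst_refl.
split.
- by move=> x hx; apply: kappa_Qt'.
- by move=> x x' _ _ h; apply: kappa_htpy.
- by move=> x x' _ _ h; have := kinv_htpy hc h; rewrite !kinvK.
- move=> y hy; exists (kinv c y); split; first exact: kinv_Qt.
  by rewrite kappaK //; apply: rst_refl.
Qed.
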